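(* Let $A$ be a ring and $I\subset A$ an ideal. (1) $A$ is $I$-adically separated (resp. $I$-adically complete) if and only if every $I$-adic Cauchy sequence consisting of elements of $I$ has at most one (resp. exactly one) limit in $I$. (2) Let $B$ be another ring with ideal $J$. If $I\cong J$ as (possibly non-unital) rings, then $A$ is $I$-adically separated (resp. complete) if and only if $B$ is $J$-adically separated (resp. complete).
   Context: Rings are commutative with $1$. ''$I$-adically complete'' means Hausdorff complete for the $I$-adic topology. An $I$-adic Cauchy sequence in $I$ is a sequence $\{x_n\}$ in $I$ with $x_n\equiv x_m \bmod I^n$ for $n\le m$ (equivalently, Cauchy for the $I$-adic topology). *)

(* Defs.v *)
From HB Require Import structures.
From mathcomp Require Import all_boot all_order all_algebra.
Set Implicit Arguments. Unset Strict Implicit. Unset Printing Implicit Defensive.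
Import GRing.Theory.
Local Open Scope ring_scope.

(* Rings are commutative with 1 (the zero ring is allowed): comPzRingType.
   Ideals are represented as Prop-valued predicates. *)
Definition is_ideal (A : comPzRingType) (I : A -> Prop) : Prop :=
  [/\ I 0, (forall x y, I x -> I y -> I (x + y)) & (forall a x, I x -> I (a * x))].

Fixpoint ideal_pow (A : comPzRingType) (I : A -> Prop) (n : nat) : A -> Prop :=
  match n with
  | 0 => fun _ => True
  | n'.+1 => fun x => exists s : seq (A * A),
      (forall p, p \in s -> ideal_pow I n' p.1 /\ I p.2) /\
      x = \sum_(p <- s) p.1 * p.2
  end.

Definition adic_limit (A : comPzRingType) (I : A -> Prop) (x : nat -> A) (y : A) : Prop :=
  forall n, exists N, forall k, (N <= k)%N -> ideal_pow I n (x k - y).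

Definition adic_cauchy (A : comPzRingType) (I : A -> Prop) (x : nat -> A) : Prop :=
  forall n, exists N, forall k m, (N <= k)%N -> (N <= m)%N -> ideal_pow I n (x k - x m).

(* I-adic Cauchy sequence in the sense of the paper: x_n = x_m mod I^n for n <= m *)
Definition adic_cauchy_std (A : comPzRingType) (I : A -> Prop) (x : nat -> A) : Prop :=
  forall n m, (n <= m)%N -> ideal_pow I n (x n - x m).

Definition adic_separated (A : comPzRingType) (I : A -> Prop) : Prop :=
  forall x : A, (forall n, ideal_pow I n x) -> x = 0.

(* I-adically complete: Hausdorff and complete for the I-adic topology
   (first countable, so sequential completeness suffices) *)
Definition adic_complete (A : comPzRingType) (I : A -> Prop) : Prop :=
  adic_separated I /\ forall x : nat -> A, adic_cauchy I x -> exists y, adic_limit I x y.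

Definition ideal_ring_iso (A B : comPzRingType) (I : A -> Prop) (J : B -> Prop) : Prop :=
  exists f : A -> B,
    [/\ (forall x, I x -> J (f x)),
        (forall x y, I x -> I y -> f (x + y) = f x + f y),
        (forall x y, I x -> I y -> f (x * y) = f x * f y),
        (forall x y, I x -> I y -> f x = f y -> x = y)
      & (forall z, J z -> exists x, I x /\ f x = z)].

(* Main.v *)
Require Import Defs.
From mathcomp Require Import all_boot all_order all_algebra.
From mathcomp Require Import ring zify.
From Stdlib Require Import Classical ClassicalEpsilon.
Set Implicit Arguments. Unset Strict Implicit.
Import GRing.Theory.
Local Open Scope ring_scope.

Lemma ideal_sum (A : comPzRingType) (P : A -> Prop) (T : eqType) (s : seq T) (F : T -> A) :
  is_ideal P -> (forall p, p \in s -> P (F p)) -> P (\sum_(p <- s) F p).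
Proof.
move=> [h0 hadd hmul]; elim: s => [|a s IH] H; first by rewrite big_nil.
rewrite big_cons; apply: hadd; first by apply: H; rewrite mem_head.
by apply: IH => p Hp; apply: H; rewrite in_cons Hp orbT.
Qed.

Lemma ideal_opp (A : comPzRingType) (P : A -> Prop) x : is_ideal P -> P x -> P (- x).
Proof. by move=> [h0 hadd hmul] Hx; rewrite -mulN1r; apply: hmul. Qed.

Lemma ideal_sub (A : comPzRingType) (P : A -> Prop) x y : is_ideal P -> P x -> P y -> P (x - y).
Proof. move=> hP Hx Hy; case: (hP) => _ hadd _; apply: hadd => //; exact: ideal_opp. Qed.

Lemma pow_ideal (A : comPzRingType) (I : A -> Prop) n : is_ideal I -> is_ideal (ideal_pow I n).
Proof.
move=> hI; elim: n => [|n [IH0 IHadd IHmul]]; first by split.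
split.
- by exists [::]; split => //; rewrite big_nil.
- move=> x y [s1 [H1 ->]] [s2 [H2 ->]]; exists (s1 ++ s2); split; last by rewrite big_cat.
  by move=> p; rewrite mem_cat => /orP [] ?; [apply: H1 | apply: H2].
- move=> a x [s [Hs ->]]; exists (map (fun p => (a * p.1, p.2)) s); split.
    move=> p /mapP [q Hq ->] /=; have [h1 h2] := Hs q Hq; split => //; exact: IHmul.
  rewrite big_map mulr_sumr; apply: eq_bigr => p _; by rewrite mulrA.
Qed.

Lemma pow0 (A : comPzRingType) (I : A -> Prop) n : is_ideal I -> ideal_pow I n 0.
Proof. by move=> hI; case: (pow_ideal n hI). Qed.

Lemma pow_S (A : comPzRingType) (I : A -> Prop) n x : is_ideal I ->
  ideal_pow I n.+1 x -> ideal_pow I n x.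
Proof.
move=> hI [s [Hs ->]]; apply: ideal_sum; first exact: pow_ideal.
move=> p Hp; have [h1 h2] := Hs p Hp; rewrite mulrC.
by case: (pow_ideal n hI) => _ _ hm; apply: hm.
Qed.

Lemma pow_mono (A : comPzRingType) (I : A -> Prop) m n x : is_ideal I ->
  (m <= n)%N -> ideal_pow I n x -> ideal_pow I m x.
Proof.
move=> hI /subnKC <-; elim: (n - m)%N => [|k IH]; first by rewrite addn0.
by rewrite addnS => H; apply: IH; apply: pow_S.
Qed.

Lemma pow1 (A : comPzRingType) (I : A -> Prop) x : is_ideal I ->
  (ideal_pow I 1 x <-> I x).
Proof.
move=> hI; split.
- move=> [s [Hs ->]]; apply: ideal_sum => // p Hp; have [_ h2] := Hs p Hp.
  by case: hI => _ _ hm; apply: hm.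
- move=> Hx; exists [:: (1, x)]; split; last by rewrite big_seq1 /= mul1r.
  by move=> p; rewrite inE => /eqP -> /=.
Qed.

Lemma pow_sub (A : comPzRingType) (I : A -> Prop) n x y : is_ideal I ->
  ideal_pow I n x -> ideal_pow I n y -> ideal_pow I n (x - y).
Proof. move=> hI; apply: ideal_sub; exact: pow_ideal. Qed.

Lemma pow_I (A : comPzRingType) (I : A -> Prop) n x : is_ideal I ->
  ideal_pow I n.+1 x -> I x.
Proof.
move=> hI H; apply/(pow1 _ hI); apply: (pow_mono hI _ H); done.
Qed.

Definition uniq_prop (A : comPzRingType) (I : A -> Prop) :=
  forall x : nat -> A, (forall n, I (x n)) -> adic_cauchy_std I x ->
        forall y z, I y -> I z -> adic_limit I x y -> adic_limit I x z -> y = z.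

Definition comp_prop (A : comPzRingType) (I : A -> Prop) :=
  forall x : nat -> A, (forall n, I (x n)) -> adic_cauchy_std I x ->
        (exists y, I y /\ adic_limit I x y) /\
        (forall y z, I y -> I z -> adic_limit I x y -> adic_limit I x z -> y = z).

Lemma uniq_sep (A : comPzRingType) (I : A -> Prop) : is_ideal I ->
  uniq_prop I -> adic_separated I.
Proof.
move=> hI H x Hx; have Ix : I x by apply/(pow1 _ hI)/Hx.
apply: (H (fun _ => x) _ _ x 0) => //.
- by move=> n m _; rewrite subrr; apply: pow0.
- by case: hI.
- by move=> n; exists 0%N => k _; rewrite subrr; apply: pow0.
- by move=> n; exists 0%N => k _; rewrite subr0.
Qed.

Lemma sep_uniq (A : comPzRingType) (I : A -> Prop) : is_ideal I ->
  adic_separated I -> uniq_prop I.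
Proof.
move=> hI Hs x _ _ y z _ _ Hy Hz; apply/eqP; rewrite -subr_eq0; apply/eqP; apply: Hs => n.
have [N1 H1] := Hy n; have [N2 H2] := Hz n.
have := H1 (N1 + N2)%N (leq_addr _ _); have := H2 (N1 + N2)%N (leq_addl _ _).
have -> : y - z = (x (N1 + N2)%N - z) - (x (N1 + N2)%N - y) by ring.
by move=> h1 h2; apply: pow_sub.
Qed.

Lemma part2 (A : comPzRingType) (I : A -> Prop) : is_ideal I ->
  (adic_complete I <-> comp_prop I).
Proof.
move=> hI; split.
- move=> [Hs Hc] x HxI Hx; split; last exact: sep_uniq.
  have [y Hy] : exists y, adic_limit I x y.
    apply: Hc => n; exists n => k m Hk Hm.
    have -> : x k - x m = (x n - x m) - (x n - x k) by ring.
    by apply: pow_sub => //; apply: Hx.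
  exists y; split => //.
  have [N HN] := Hy 1%N; have := HN N (leqnn _) => /(pow1 _ hI) h.
  have -> : y = x N - (x N - y) by ring.
  by apply: ideal_sub.
- move=> H; split.
    by apply: uniq_sep => // x h1 h2; case: (H x h1 h2).
  move=> x Hc.
  pose N n := proj1_sig (constructive_indefinite_description _ (Hc n)).
  have HN n : forall k m, (N n <= k)%N -> (N n <= m)%N -> ideal_pow I n (x k - x m).
    exact: (proj2_sig (constructive_indefinite_description _ (Hc n))).
  pose fix M n := match n with 0 => (N 0 + N 1)%N | n'.+1 => (M n' + N n'.+2)%N end.
  have Mmono : forall n m, (n <= m)%N -> (M n <= M m)%N.
    move=> n m /subnKC <-; elim: (m - n)%N => [|k IH]; first by rewrite addn0.
    by rewrite addnS /=; apply: (leq_trans IH); apply: leq_addr.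
  have MN1 : forall n, (N n.+1 <= M n)%N by case => [|n] /=; apply: leq_addl.
  have MN : forall i j, (i <= j.+1)%N -> (N i <= M j)%N.
    case=> [|i] j Hij.
      by apply: (leq_trans _ (Mmono 0%N j (leq0n _))); apply: leq_addr.
    by apply: (leq_trans (MN1 i)); apply: Mmono.
  pose z n := x (M n) - x (M 0%N).
  have Iz : forall n, I (z n).
    by move=> n; apply/(pow1 _ hI); apply: HN; apply: MN.
  have Cz : adic_cauchy_std I z.
    move=> n m Hnm; have -> : z n - z m = x (M n) - x (M m) by rewrite /z; ring.
    by apply: HN; apply: MN; lia.
  have [[w [Iw Hw]] _] := H z Iz Cz.
  exists (w + x (M 0%N)) => n.
  have [Nw HNw] := Hw n.
  exists (N n) => k Hk.
  pose j := (n + Nw)%N.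
  have -> : x k - (w + x (M 0%N)) = (x k - x (M j)) + (z j - w) by rewrite /z; ring.
  case: (pow_ideal n hI) => _ hadd _; apply: hadd.
    by apply: HN => //; apply: MN; lia.
  by apply: HNw; rewrite /j; lia.
Qed.

Definition hom (A B : comPzRingType) (I : A -> Prop) (J : B -> Prop) (f : A -> B) :=
  [/\ (forall x, I x -> J (f x)),
      (forall x y, I x -> I y -> f (x + y) = f x + f y)
    & (forall x y, I x -> I y -> f (x * y) = f x * f y)].

Definition iso2 (A B : comPzRingType) (I : A -> Prop) (J : B -> Prop) f g :=
  [/\ hom I J f, hom J I g, (forall x, I x -> g (f x) = x) & (forall y, J y -> f (g y) = y)].

Lemma iso2_sym (A B : comPzRingType) (I : A -> Prop) (J : B -> Prop) f g :
  iso2 I J f g -> iso2 J I g f.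
Proof. by case. Qed.

Lemma hom0 (A B : comPzRingType) (I : A -> Prop) (J : B -> Prop) f :
  is_ideal I -> hom I J f -> f 0 = 0.
Proof.
move=> [h0 _ _] [_ hadd _]; have := hadd 0 0 h0 h0; rewrite addr0 => H.
by apply: (@addrI _ (f 0)); rewrite addr0 -H.
Qed.

Lemma hom_sub (A B : comPzRingType) (I : A -> Prop) (J : B -> Prop) f a b :
  is_ideal I -> hom I J f -> I a -> I b -> f (a - b) = f a - f b.
Proof.
move=> hI [_ hadd _] Ha Hb.
have Hab : I (a - b) by apply: ideal_sub.
have := hadd _ _ Hab Hb; rewrite subrK => ->; by rewrite addrK.
Qed.

Lemma hom_sum (A B : comPzRingType) (I : A -> Prop) (J : B -> Prop) f (s : seq (A * A)) :
  is_ideal I -> hom I J f -> (forall p, p \in s -> I p.1 /\ I p.2) ->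
  f (\sum_(p <- s) p.1 * p.2) = \sum_(p <- s) f p.1 * f p.2.
Proof.
move=> hI hf; case: (hf) => _ hadd hmul.
elim: s => [|a s IH] H; first by rewrite !big_nil; apply: hom0 hf.
have [h1 h2] := H a (mem_head _ _).
have H' : forall p, p \in s -> I p.1 /\ I p.2 by move=> p Hp; apply: H; rewrite in_cons Hp orbT.
rewrite !big_cons hadd ?hmul ?IH //.
  by case: hI => _ _ hm; apply: hm.
apply: ideal_sum => // p Hp; have [h3 h4] := H' p Hp; by case: hI => _ _ hm; apply: hm.
Qed.

Lemma hom_pow (A B : comPzRingType) (I : A -> Prop) (J : B -> Prop) f :
  is_ideal I -> is_ideal J -> hom I J f ->
  forall n x, ideal_pow I n.+1 x -> ideal_pow J n.+1 (f x).
Proof.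
move=> hI hJ hf; case: (hf) => hmap _ _.
elim=> [|n IH] x Hx.
  by apply/(pow1 _ hJ); apply: hmap; apply/(pow1 _ hI).
case: Hx => s [Hs ->].
have Hs' : forall p, p \in s -> I p.1 /\ I p.2.
  by move=> p Hp; have [h1 h2] := Hs p Hp; split => //; apply: pow_I h1.
rewrite (hom_sum hI hf Hs').
exists (map (fun p => (f p.1, f p.2)) s); split; last by rewrite big_map.
move=> p /mapP [q Hq ->] /=; have [h1 h2] := Hs q Hq; split; [exact: IH | exact: hmap].
Qed.

Lemma hom_pow' (A B : comPzRingType) (I : A -> Prop) (J : B -> Prop) f :
  is_ideal I -> is_ideal J -> hom I J f ->
  forall n x, I x -> ideal_pow I n x -> ideal_pow J n (f x).
Proof. move=> hI hJ hf [|n] x _ H; [exact: Logic.I | exact: (hom_pow hI hJ hf)]. Qed.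

Lemma hom_lim (A B : comPzRingType) (I : A -> Prop) (J : B -> Prop) f u v y :
  is_ideal I -> is_ideal J -> hom I J f -> (forall k, I (u k)) -> I y ->
  (forall k, v k = f (u k)) -> adic_limit I u y -> adic_limit J v (f y).
Proof.
move=> hI hJ hf Iu Iy Hv H n; have [N HN] := H n; exists N => k Hk.
rewrite Hv -(hom_sub hI hf) //; apply: (hom_pow' hI hJ hf); last exact: HN.
exact: ideal_sub.
Qed.

Lemma hom_cauchy (A B : comPzRingType) (I : A -> Prop) (J : B -> Prop) f u v :
  is_ideal I -> is_ideal J -> hom I J f -> (forall k, I (u k)) ->
  (forall k, v k = f (u k)) -> adic_cauchy_std I u -> adic_cauchy_std J v.
Proof.
move=> hI hJ hf Iu Hv H n m Hnm.
rewrite !Hv -(hom_sub hI hf) //; apply: (hom_pow' hI hJ hf); last exact: H.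
exact: ideal_sub.
Qed.

Lemma iso_sep (A B : comPzRingType) (I : A -> Prop) (J : B -> Prop) f g :
  is_ideal I -> is_ideal J -> iso2 I J f g -> adic_separated I -> adic_separated J.
Proof.
move=> hI hJ [hf hg gf fg] Hs y Hy.
have Jy : J y by apply/(pow1 _ hJ).
have -> : y = f (g y) by rewrite fg.
rewrite (Hs (g y)); first exact: hom0 hf.
by move=> n; apply: (hom_pow' hJ hI hg).
Qed.

Lemma iso_comp (A B : comPzRingType) (I : A -> Prop) (J : B -> Prop) f g :
  is_ideal I -> is_ideal J -> iso2 I J f g -> comp_prop I -> comp_prop J.
Proof.
move=> hI hJ [hf hg gf fg] Hc z Iz Cz.
have Ix : forall k, I (g (z k)) by move=> k; case: hg => hm _ _; apply: hm.
have Cx : adic_cauchy_std I (fun k => g (z k)).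
  by apply: (hom_cauchy hJ hI hg Iz).
have [[y [Iy Hy]] Hu] := Hc _ Ix Cx.
split.
  exists (f y); split; first by case: hf => hm _ _; apply: hm.
  apply: (hom_lim hI hJ hf Ix Iy _ Hy) => k; by rewrite fg.
move=> y1 y2 Iy1 Iy2 H1 H2.
have Ig1 : I (g y1) by case: hg => hm _ _; apply: hm.
have Ig2 : I (g y2) by case: hg => hm _ _; apply: hm.
rewrite -(fg y1) // -(fg y2) //; congr (f _).
apply: Hu => //; apply: (hom_lim hJ hI hg Iz) => //.
Qed.

Lemma mk_iso2 (A B : comPzRingType) (I : A -> Prop) (J : B -> Prop) :
  is_ideal I -> is_ideal J -> ideal_ring_iso I J -> exists f g, iso2 I J f g.
Proof.
move=> hI hJ [f [hmap hadd hmul hinj hsurj]].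
have ex : forall z, exists x, J z -> I x /\ f x = z.
  move=> z; case: (classic (J z)) => Hz.
    by have [x Hx] := hsurj z Hz; exists x.
  by exists 0.
pose g z := proj1_sig (constructive_indefinite_description _ (ex z)).
have Hg : forall z, J z -> I (g z) /\ f (g z) = z.
  by move=> z; exact: (proj2_sig (constructive_indefinite_description _ (ex z))).
have gf : forall x, I x -> g (f x) = x.
  move=> x Ix; have [h1 h2] := Hg (f x) (hmap x Ix); exact: hinj.
exists f, g; split => //.
split.
- by move=> z Hz; case: (Hg z Hz).
- move=> a b Ha Hb; have [ia fa] := Hg a Ha; have [ib fb] := Hg b Hb.
  have Iab : I (g a + g b) by case: hI => _ hd _; apply: hd.
  by rewrite -{1}fa -{1}fb -hadd // gf.
- move=> a b Ha Hb; have [ia fa] := Hg a Ha; have [ib fb] := Hg b Hb.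
  have Iab : I (g a * g b) by case: hI => _ _ hm; rewrite mulrC; apply: hm.
  by rewrite -{1}fa -{1}fb -hmul // gf.
- by move=> z Hz; case: (Hg z Hz).
Qed.

Theorem lemma3p9 (A : comPzRingType) (I : A -> Prop) (hI : is_ideal I) :
  [/\
   (adic_separated I <->
      forall x : nat -> A, (forall n, I (x n)) -> adic_cauchy_std I x ->
        forall y z, I y -> I z -> adic_limit I x y -> adic_limit I x z -> y = z),
   (adic_complete I <->
      forall x : nat -> A, (forall n, I (x n)) -> adic_cauchy_std I x ->
        (exists y, I y /\ adic_limit I x y) /\
        (forall y z, I y -> I z -> adic_limit I x y -> adic_limit I x z -> y = z))
  & (forall (B : comPzRingType) (J : B -> Prop), is_ideal J ->
       ideal_ring_iso I J ->
       (adic_separated I <-> adic_separated J) /\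
       (adic_complete I <-> adic_complete J))].
Proof.
split.
- split; [exact: sep_uniq | exact: uniq_sep].
- exact: part2.
- move=> B J hJ Hiso; have [f [g Hfg]] := mk_iso2 hI hJ Hiso.
  have Hgf := iso2_sym Hfg.
  split; split.
  + exact: iso_sep Hfg.
  + exact: iso_sep Hgf.
  + by move/(part2 hI) => H; apply/(part2 hJ); apply: iso_comp Hfg H.
  + by move/(part2 hJ) => H; apply/(part2 hI); apply: iso_comp Hgf H.
Qed.
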